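(* Let $A=(A(i,j))_{i,j\in\mathbb{N}}$ be an infinite matrix with entries in $\{0,1\}$ such that each row has only finitely many entries equal to $1$, let $(X,\mu)$ be a $\sigma$-finite measure space and let $(\{f_i\}_{i=1}^\infty,\{D_i\}_{i=1}^\infty)$ together with a nonsingular $F:X\to X$ be an $A_\infty$-branching system on $(X,\mu)$. Suppose $\mu(R_i)<\infty$ for each $i$, and suppose each $\Phi_{f_i}$ is a positive constant function on $D_i$, say $\Phi_{f_i}=b_i>0$. Let $W\subseteq L_1(X,\mu)$ be the linear span of $\{\chi_{R_i}:i\in\mathbb{N}\}$ (finite linear combinations). Then $P_F$ maps $W$ into $W$, and the matrix of $P_F|_W:W\to W$ with respect to the family $(\chi_{R_i})_{i\in\mathbb{N}}$ is $A^TB$, where $B$ is the infinite diagonal matrix with $B_{i,i}=b_i$; that is, for every $z\in\mathbb{N}$, $$P_F(\chi_{R_z})=\sum_{j\in\mathbb{N}}(A^TB)_{j,z}\,\chi_{R_j}=\sum_{j:A(z,j)=1}b_z\,\chi_{R_j}.$$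
   Context: Notation: for measurable $Y,Z\subseteq X$, write $Y\stackrel{\mu\text{-a.e.}}{=}Z$ if $\mu(Y\setminus Z)=0=\mu(Z\setminus Y)$. For a measurable map $h$ on a measurable set $W'$, $\mu\circ h$ is the measure $E\mapsto\mu(h(E))$ on $W'$. For finite $U,V\subseteq\mathbb{N}$ and $j\in\mathbb{N}$ put $A(U,V,j)=\prod_{u\in U}A(u,j)\prod_{v\in V}(1-A(v,j))$. A transformation $F$ is nonsingular if $\mu(F^{-1}(E))=0$ whenever $\mu(E)=0$. The Perron-Frobenius operator $P_F:L_1(X,\mu)\to L_1(X,\mu)$ is defined by $\int_E P_F\psi\,d\mu=\int_{F^{-1}(E)}\psi\,d\mu$ for all measurable $E\subseteq X$ and $\psi\in L_1(X,\mu)$. The product $A^TB$ is the ordinary matrix product (well defined since $B$ is diagonal), with $(A^TB)_{j,z}=A(z,j)b_z$. An $A_\infty$-branching system on $(X,\mu)$ is a family $(\{f_i\}_{i=1}^\infty,\{D_i\}_{i=1}^\infty)$ together with a nonsingular transformation $F:X\to X$ such that: (1) $f_i:D_i\to R_i$ is measurable, $D_i,R_i$ are measurable subsets of $X$, and $f_i(D_i)\stackrel{\mu\text{-a.e.}}{=}R_i$ for each $i$; (2) $F\circ f_i=\mathrm{id}_{D_i}$ $\mu$-a.e. on $D_i$ for each $i$; (3) $\mu(R_i\cap R_j)=0$ for $i\neq j$; (4) $\mu(R_j\cap D_i)=0$ if $A(i,j)=0$ and $\mu(R_j\setminus D_i)=0$ if $A(i,j)=1$; (5) for each pair $U,V$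 of finite subsets of $\mathbb{N}$ such that $A(U,V,j)=1$ for only finitely many $j$, $\bigcap_{u\in U}D_u\cap\bigcap_{v\in V}(X\setminus D_v)\stackrel{\mu\text{-a.e.}}{=}\bigcup_{j:A(U,V,j)=1}R_j$; (6) there exist the Radon-Nikodym derivatives $\Phi_{f_i}$ of $\mu\circ f_i$ with respect to $\mu$ on $D_i$ and $\Phi_{f_i^{-1}}$ of $\mu\circ f_i^{-1}$ with respect to $\mu$ on $R_i$, where $f_i^{-1}:=F|_{R_i}$. *)

(* Defs.v *)
From HB Require Import structures.
From mathcomp Require Import all_boot all_order all_algebra.
From mathcomp Require Import all_classical all_reals all_analysis.
From mathcomp Require Import measurable_realfun.
Set Implicit Arguments. Unset Strict Implicit. Unset Printing Implicit Defensive.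
Import Order.TTheory GRing.Theory Num.Theory.
Local Open Scope classical_set_scope.
Local Open Scope ring_scope.

Definition ae_eqset d (T : measurableType d) (R : realType)
  (mu : {measure set T -> \bar R}) (Y Z : set T) : Prop :=
  mu (Y `\` Z) = 0%E /\ mu (Z `\` Y) = 0%E.

Definition AUV (A : nat -> nat -> bool) (U V : seq nat) (j : nat) : bool :=
  all (fun u => A u j) U && all (fun v => ~~ A v j) V.

Definition nonsingular d (T : measurableType d) (R : realType)
  (mu : {measure set T -> \bar R}) (F : T -> T) : Prop :=
  measurable_fun setT F /\
  forall E, measurable E -> mu E = 0%E -> mu (F @^-1` E) = 0%E.

(* g represents P_F psi in L_1: g is integrable and
   int_E g dmu = int_{F^-1(E)} psi dmu for all measurable E. *)
Definition PF_image d (T : measurableType d) (R : realType)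
  (mu : {measure set T -> \bar R}) (F : T -> T) (psi g : T -> R) : Prop :=
  mu.-integrable setT (EFin \o g) /\
  forall E, measurable E ->
    (\int[mu]_(x in E) (g x)%:E = \int[mu]_(x in F @^-1` E) (psi x)%:E)%E.

(* A_infinity-branching system (conditions (1)-(6)).  Images of measurable
   sets under f_i and under f_i^{-1} := F|_{R_i} are assumed measurable,
   so that mu o f_i and mu o f_i^{-1} are measures. *)
Definition branching_system d (T : measurableType d) (R : realType)
  (mu : {measure set T -> \bar R}) (A : nat -> nat -> bool)
  (f : nat -> T -> T) (D Rg : nat -> set T) (F : T -> T) : Prop :=
  nonsingular mu F /\
  (forall i, measurable (D i) /\ measurable (Rg i) /\
     measurable_fun (D i) (f i) /\
     (forall E, measurable E -> E `<=` D i -> measurable (f i @` E)) /\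
     ae_eqset mu (f i @` D i) (Rg i)) /\
  (forall i, {ae mu, forall x, D i x -> F (f i x) = x}) /\
  (forall i j, i <> j -> mu (Rg i `&` Rg j) = 0%E) /\
  (forall i j, (~~ A i j -> mu (Rg j `&` D i) = 0%E) /\
               (A i j -> mu (Rg j `\` D i) = 0%E)) /\
  (forall U V : seq nat, finite_set [set j | AUV A U V j] ->
     ae_eqset mu
       ((\bigcap_(u in [set u | u \in U]) D u) `&`
        (\bigcap_(v in [set v | v \in V]) ~` D v))
       (\bigcup_(j in [set j | AUV A U V j]) Rg j)) /\
  (forall i, exists Phi : T -> \bar R,
     measurable_fun (D i) Phi /\ (forall x, D i x -> (0 <= Phi x)%E) /\
     forall E, measurable E -> E `<=` D i ->
       mu (f i @` E) = (\int[mu]_(x in E) Phi x)%E) /\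
  (forall i, (forall E, measurable E -> E `<=` Rg i -> measurable (F @` E)) /\
     exists Phi : T -> \bar R,
     measurable_fun (Rg i) Phi /\ (forall x, Rg i x -> (0 <= Phi x)%E) /\
     forall E, measurable E -> E `<=` Rg i ->
       mu (F @` E) = (\int[mu]_(x in E) Phi x)%E).

(* Main.v *)
Require Import Defs.
From HB Require Import structures.
From mathcomp Require Import all_boot all_order all_algebra.
From mathcomp Require Import all_classical all_reals all_analysis.
From mathcomp Require Import measurable_realfun.
Import Order.TTheory GRing.Theory Num.Theory.
Set Implicit Arguments. Unset Strict Implicit.
Local Open Scope classical_set_scope.
Local Open Scope ring_scope.

Section helpers.
Context d (X : measurableType d) (R : realType) (mu : {measure set X -> \bar R}).

Lemma null_ae (M : set X) : measurable M -> mu M = 0%E -> {ae mu, forall x, ~ M x}.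
Proof.
move=> mM M0; exists M; split => // x /= nn; exact: contrapT.
Qed.

Lemma ae_meas (Y Z W : set X) : measurable Y -> measurable Z -> measurable W ->
  {ae mu, forall x, Y x <-> Z x} -> mu (Y `&` W) = mu (Z `&` W).
Proof.
move=> mY mZ mW h.
rewrite -!(integral_indic _ mW)//.
apply: ae_eq_integral => //.
- by apply/measurable_EFinP; apply: measurable_funTS; exact: measurable_indic.
- by apply/measurable_EFinP; apply: measurable_funTS; exact: measurable_indic.
apply: filterS h => x h Wx; congr EFin.
rewrite /indic; suff -> : (x \in Y) = (x \in Z) by [].
by apply/idP/idP; rewrite !inE => /h.
Qed.

End helpers.

Section helpers2.
Context d (X : measurableType d) (R : realType) (mu : {measure set X -> \bar R}).

Lemma integrable_ind1 (A : set X) : measurable A -> (mu A < +oo)%E ->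
  forall E, measurable E -> mu.-integrable E (fun x => (\1_A x)%:E).
Proof.
move=> mA fA E mE.
apply: (integrableS measurableT) => //.
apply/integrableP; split; first by apply/measurable_EFinP; exact: measurable_indic.
rewrite (eq_integral (fun x => (\1_A x)%:E)); last first.
  by move=> t _; rewrite gee0_abs// lee_fin.
by rewrite integral_indic// setIT.
Qed.

Lemma integrable_ind (A : set X) (c : R) : measurable A -> (mu A < +oo)%E ->
  forall E, measurable E -> mu.-integrable E (fun x => (c * \1_A x)%:E).
Proof.
move=> mA fA E mE.
under eq_fun do rewrite EFinM.
apply: integrableZl => //.
exact: (integrable_ind1 mA fA mE).
Qed.

Lemma int_sum_ind (I : Type) (s : seq I) (P : pred I) (c : I -> R) (Rg : I -> set X)
  (mR : forall j, measurable (Rg j)) (fR : forall j, (mu (Rg j) < +oo)%E)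
  (E : set X) (mE : measurable E) :
  (\int[mu]_(x in E) (\sum_(j <- s | P j) c j * \1_(Rg j) x)%:E =
    \sum_(j <- s | P j) (c j)%:E * mu (Rg j `&` E))%E.
Proof.
under eq_integral do rewrite -sumEFin.
rewrite integral_sum //; last first. move=> j. have h := (integrable_ind (c j) (mR j) (fR j) mE). exact: h.
apply: eq_bigr => j _.
under eq_integral do rewrite EFinM.
by rewrite integralZl ?integral_indic //; exact: (integrable_ind1 (mR j) (fR j) mE).
Qed.

Lemma integrable_sum_ind (I : Type) (s : seq I) (P : pred I) (c : I -> R) (Rg : I -> set X)
  (mR : forall j, measurable (Rg j)) (fR : forall j, (mu (Rg j) < +oo)%E) :
  mu.-integrable setT (EFin \o (fun x => \sum_(j <- s | P j) c j * \1_(Rg j) x)).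
Proof.
rewrite /comp; under eq_fun do rewrite -sumEFin.
apply: integrable_sum => [|j _]; [exact: measurableT|exact: (integrable_ind (c j) (mR j) (fR j) measurableT)].
Qed.

End helpers2.

Lemma core d (X : measurableType d)
  (R : realType) (mu : {measure set X -> \bar R})
  (A : nat -> nat -> bool) (f : nat -> X -> X) (D Rg : nat -> set X)
  (F : X -> X) (b : nat -> R) :
  (forall i, finite_set [set j | A i j]) ->
  branching_system mu A f D Rg F ->
  (forall i, (mu (Rg i) < +oo)%E) ->
  (forall i E, measurable E -> E `<=` D i ->
     mu (f i @` E) = ((b i)%:E * mu E)%E) ->
  forall z N, (forall j, (N <= j)%N -> ~~ A z j) ->
  forall E, measurable E ->
  mu (Rg z `&` F @^-1` E) = (\sum_(j < N | A z j) (b z)%:E * mu (Rg j `&` E))%E.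
Proof.
move=> finA [[mF nsF] [h1 [h2 [h3 [h4 [h5 _]]]]]] finR hb z N hN E mE.
have [mD [mRg [_ [mimg aeimg]]]] := h1 z.
have mFE : measurable (F @^-1` E) by rewrite -[F @^-1` E]setTI; exact: mF.
have mfD : measurable (f z @` D z) := mimg _ mD (@subset_refl _ _).
have s1 : mu (Rg z `&` F @^-1` E) = mu (f z @` D z `&` F @^-1` E).
  apply: ae_meas => //.
  case: aeimg => n1 n2.
  apply: (filterS2 (ae_filter_ringOfSetsType mu) _ (null_ae (measurableD mfD mRg) n1) (null_ae (measurableD mRg mfD) n2)).
  move=> x a1 a2; split => hx; apply: contrapT => nx.
  - by apply: a2.
  - by apply: a1.
case: (h2 z) => N0 [mN0 N00 sN0].
have fix0 : forall y, D z y -> ~ N0 y -> F (f z y) = y.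
  move=> y Dy nN0; apply: contrapT => ne; apply: nN0; apply: sN0 => /= H.
  by apply: ne; exact: H.
have mDN : measurable (D z `&` N0) by exact: measurableI.
have mB : measurable (f z @` (D z `&` N0)) by apply: mimg mDN _; exact: subIsetl.
have muB : mu (f z @` (D z `&` N0)) = 0%E.
  rewrite hb //.
  by rewrite (subset_measure0 _ _ _ N00) ?mule0 //; exact: subIsetr.
have mS : measurable (D z `\` N0) by exact: measurableD.
have mSE : measurable (f z @` ((D z `\` N0) `&` E)).
  by apply: mimg; [exact: measurableI|move=> y [[]]].
have s2 : mu (f z @` D z `&` F @^-1` E) = mu (f z @` ((D z `\` N0) `&` E)).
  rewrite -[in LHS](setIT (_ `&` _)) -[in RHS](setIT (f z @` _)).
  apply: ae_meas => //; first exact: measurableI.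
  apply: filterS (null_ae mB muB) => x nB; split.
  - move=> [[y Dy eyx] FE]; subst x.
    have nN0 : ~ N0 y by move=> N0y; apply: nB; exists y.
    by exists y => //; split => //; rewrite /preimage /= (fix0 _ Dy nN0) in FE.
  - move=> [y [[Dy nN0y] Ey] <-]; split; first by exists y.
    by rewrite /preimage /= (fix0 _ Dy nN0y).
have s3 : mu (f z @` ((D z `\` N0) `&` E)) = ((b z)%:E * mu (D z `&` E))%E.
  rewrite hb; [|exact: measurableI|by move=> y [[]]].
  congr (_ * _)%E; apply: ae_meas => //.
  apply: filterS (null_ae mN0 N00) => x nx; split; first by case.
  by move=> Dx; split.
have eY : (\bigcap_(u in [set u | u \in [:: z]]) D u) `&`
          (\bigcap_(v in [set v | v \in [::]]) ~` D v) = D z.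
  apply/seteqP; split => x /=.
  - by move=> [h _]; apply: h; rewrite /= mem_seq1.
  - move=> Dx; split; first by move=> u /=; rewrite mem_seq1 => /eqP ->.
    by move=> v /=; rewrite in_nil.
have eJ : [set j | AUV A [:: z] [::] j] = [set j | A z j].
  by apply/seteqP; split => j /=; rewrite /AUV /= !andbT.
have h5z := h5 [:: z] [::]; rewrite eY eJ in h5z.
have [n1 n2] := h5z (finA z).
have mU : measurable (\bigcup_(j in [set j | A z j]) Rg j).
  by apply: bigcup_measurable => k _; case: (h1 k) => _ [].
have a5 : {ae mu, forall x, D z x <-> exists j, A z j /\ Rg j x}.
  apply: (filterS2 (ae_filter_ringOfSetsType mu) _ (null_ae (measurableD mD mU) n1) (null_ae (measurableD mU mD) n2)).
  move=> x a1 a2; split => hx.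
  - apply: contrapT => nx; apply: a1; split => // -[j /= Azj Rjx]; apply: nx; by exists j.
  - apply: contrapT => nx; apply: a2; split => //; case: hx => j [Azj Rjx]; by exists j.
have a3 : {ae mu, forall x, forall i j : 'I_N, i != j -> ~ (Rg i x /\ Rg j x)}.
  apply: filter_forall => i; apply: filter_forall => j.
  case: (eqVneq i j) => [->|ne].
    by apply: aeW => x.
  have ne' : (i : nat) <> j by move=> /val_inj /eqP; rewrite (negbTE ne).
  have mRij : measurable (Rg i `&` Rg j).
    by apply: measurableI; [case: (h1 i) => _ []|case: (h1 j) => _ []].
  by apply: filterS (null_ae mRij (h3 _ _ ne')) => x hx _.
have s4 : mu (D z `&` E) = (\sum_(j < N | A z j) mu (Rg j `&` E))%E.
  rewrite -integral_indic //.
  transitivity (\int[mu]_(x in E) (\sum_(j < N | A z j) 1 * \1_(Rg j) x)%:E)%E.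
    apply: ae_eq_integral => //.
    - by apply/measurable_EFinP; apply: measurable_funTS; exact: measurable_indic.
    - apply: measurable_funTS; apply: (measurable_int mu).
      apply: (@integrable_sum_ind _ _ _ mu _ (index_enum 'I_N) (fun j : 'I_N => A z j) (fun _ => 1) (fun j : 'I_N => Rg j)).
        by move=> j; case: (h1 j) => _ [].
      by move=> j; exact: finR.
    apply: (filterS2 (ae_filter_ringOfSetsType mu) _ a5 a3) => x a5x a3x _.
    congr EFin.
    case: (pselect (D z x)) => Dx.
    + have [j [Azj Rjx]] := (a5x.1 Dx).
      have jN : (j < N)%N by rewrite ltnNge; apply/negP => /hN; rewrite Azj.
      rewrite (bigD1 (Ordinal jN)) //= indicE mem_set // mul1r indicE mem_set //.
      rewrite big1 ?addr0 // => i /andP [Azi ine].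
      rewrite indicE memNset ?mulr0 // => Rix.
      exact: (a3x i (Ordinal jN) ine).
    + rewrite indicE memNset // big1 // => i Azi.
      rewrite indicE memNset ?mulr0 // => Rix; apply: Dx; apply: a5x.2.
      by exists i.
  rewrite int_sum_ind //; last by move=> j; case: (h1 j) => _ [].
  by apply: eq_bigr => j _; rewrite mul1e.
rewrite s1 s2 s3 s4 ge0_sume_distrr //.
Qed.

Lemma seq_bound (s : seq nat) : exists N, forall j, j \in s -> (j < N)%N.
Proof.
elim: s => [|a s [N HN]]; first by exists 0%N.
exists (maxn a.+1 N) => j; rewrite inE => /orP [/eqP ->|/HN jN].
- by rewrite leq_max leqnn.
- by rewrite leq_max jN orbT.
Qed.

Lemma fin_bound {S : set nat} : finite_set S -> exists N, forall j, (N <= j)%N -> ~ S j.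
Proof.
move/finite_seqP => [s ->]; have [N HN] := seq_bound s.
exists N => j Nj /= js; have := HN _ js; by rewrite ltnNge Nj.
Qed.

Lemma rows_bound (A : nat -> nat -> bool) : (forall i, finite_set [set j | A i j]) ->
  forall n, exists M, forall z, (z < n)%N -> forall j, (M <= j)%N -> ~~ A z j.
Proof.
move=> finA; elim => [|n [M HM]]; first by exists 0%N.
have [N HN] := fin_bound (finA n).
exists (maxn M N) => z; rewrite ltnS leq_eqVlt => /orP [/eqP ->|zn] j.
- by rewrite geq_max => /andP [_ /HN] /negP.
- by rewrite geq_max => /andP [/(HM _ zn)].
Qed.
Unset Implicit Arguments. Set Strict Implicit.
Theorem mainTheorem7 (d : measure_display) (X : measurableType d)
  (R : realType) (mu : {measure set X -> \bar R})
  (A : nat -> nat -> bool) (f : nat -> X -> X) (D Rg : nat -> set X)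
  (F : X -> X) (b : nat -> R) :
  sigma_finite setT mu ->
  (forall i, finite_set [set j | A i j]) ->
  branching_system mu A f D Rg F ->
  (forall i, (mu (Rg i) < +oo)%E) ->
  (forall i, 0 < b i) ->
  (* Phi_{f_i} = b_i : the Radon-Nikodym derivative of mu o f_i on D_i *)
  (forall i E, measurable E -> E `<=` D i ->
     mu (f i @` E) = ((b i)%:E * mu E)%E) ->
  (* P_F maps W = span {chi_{R_i}} into W *)
  (forall (n : nat) (c : nat -> R), exists (m : nat) (e : nat -> R),
     PF_image mu F (fun x => \sum_(z < n) c z * \1_(Rg z) x)
                   (fun x => \sum_(j < m) e j * \1_(Rg j) x)) /\
  (* P_F(chi_{R_z}) = sum_{j : A(z,j)=1} b_z chi_{R_j}  (in L_1) *)
  (forall (z N : nat), (forall j, (N <= j)%N -> ~~ A z j) ->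
     PF_image mu F (\1_(Rg z)) (fun x => \sum_(j < N | A z j) b z * \1_(Rg j) x)
     /\ forall g : X -> R, PF_image mu F (\1_(Rg z)) g ->
          {ae mu, forall x, g x = \sum_(j < N | A z j) b z * \1_(Rg j) x}).
Proof.
move=> _ finA hbr finR bpos hb.
have hbr' := hbr.
move: hbr' => [[mF _] [h1 _]].
have mRg : forall j, measurable (Rg j) by move=> j; case: (h1 j) => _ [].
have mFE : forall E, measurable E -> measurable (F @^-1` E).
  by move=> E mE; rewrite -[F @^-1` E]setTI; exact: mF.
have intind : forall z E, measurable E ->
    (\int[mu]_(x in F @^-1` E) (\1_(Rg z) x)%:E = mu (Rg z `&` F @^-1` E))%E.
  by move=> z E mE; rewrite integral_indic //; exact: mFE.
split.
  move=> n c.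
  have [M HM] := @rows_bound A finA n.
  exists M, (fun j => \sum_(z < n | A z j) c z * b z).
  split.
    exact: (@integrable_sum_ind _ _ _ mu _ (index_enum 'I_M) xpredT
      (fun j : 'I_M => \sum_(z < n | A z j) c z * b z) (fun j : 'I_M => Rg j)).
  move=> E mE.
  rewrite (@int_sum_ind _ _ _ mu _ (index_enum 'I_M) xpredT
      (fun j : 'I_M => \sum_(z < n | A z j) c z * b z) (fun j : 'I_M => Rg j)) //.
  rewrite (@int_sum_ind _ _ _ mu _ (index_enum 'I_n) xpredT
      c (fun j : 'I_n => Rg j)) //; last exact: mFE.
  under [RHS]eq_bigr => z _ do rewrite (core finA hbr finR hb (HM z (ltn_ord z)) mE).
  have fr : forall j, mu (Rg j `&` E) = (fine (mu (Rg j `&` E)))%:E.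
    move=> j; rewrite fineK // ge0_fin_numE //.
    apply: le_lt_trans (finR j); apply: le_measure; rewrite ?inE //=;
    by [apply: measurableI | apply: subIsetl].
  under [LHS]eq_bigr => j _ do rewrite fr -EFinM.
  under [RHS]eq_bigr => z _ do (under eq_bigr => j _ do rewrite fr -EFinM; rewrite sumEFin -EFinM).
  rewrite !sumEFin; congr EFin.
  set r := fun j => fine (mu (Rg j `&` E)).
  under eq_bigr => j _ do rewrite mulr_suml.
  under [RHS]eq_bigr => z _ do rewrite mulr_sumr.
  under [LHS]eq_bigr => j _ do rewrite big_mkcond.
  under [RHS]eq_bigr => j _ do rewrite big_mkcond.
  rewrite exchange_big /=.
  apply: eq_bigr => z _; apply: eq_bigr => j _.
  by case: (A z j) => //; rewrite mulrA.
move=> z N hN.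
have pf : PF_image mu F (\1_(Rg z)) (fun x => \sum_(j < N | A z j) b z * \1_(Rg j) x).
  split.
    exact: (@integrable_sum_ind _ _ _ mu _ (index_enum 'I_N) (fun j : 'I_N => A z j)
      (fun _ => b z) (fun j : 'I_N => Rg j)).
  move=> E mE.
  rewrite (@int_sum_ind _ _ _ mu _ (index_enum 'I_N) (fun j : 'I_N => A z j)
      (fun _ => b z) (fun j : 'I_N => Rg j)) //.
  by rewrite intind // (core finA hbr finR hb hN mE).
split => // g [gi gE].
pose h := (fun x => \sum_(j < N | A z j) b z * \1_(Rg j) x).
have := @integral_ae_eq _ _ _ mu setT measurableT
  (EFin \o (fun x => \sum_(j < N | A z j) b z * \1_(Rg j) x)) (EFin \o g) gi.
case: pf => pfi pfE.
move=> /(_ (measurable_int mu pfi)).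
have : forall E, E `<=` setT -> measurable E ->
   (\int[mu]_(x in E) (EFin \o g) x = \int[mu]_(x in E) (EFin \o h) x)%E.
  by move=> E _ mE; rewrite /comp gE // pfE.
move=> H /(_ H).
apply: filterS => x /(_ I) /= [].
done.
Qed.
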